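(* Let $Q=ABA'B'$ be a quadrilateral in $K^2$ (possibly improper), let $(h,k)$ be the centroid of $Q$, and let $(a,b)\in K^2$ be a diagonal point of $Q$ that is not at infinity. Then the bisector locus of $Q$ is given by $$\Phi_Q(X-h,Y-k)=\Phi_Q(a-h,b-k),$$ i.e. it is the set of $(x,y)\in K^2$ with $\Phi_Q(x-h,y-k)=\Phi_Q(a-h,b-k)$. Thus the bisector locus is a conic with center $(h,k)$.
   Context: $K$ is a field of characteristic $\neq 2$, and we work in the affine plane $K^2$ (regarded inside the projective plane, so lines have points at infinity). Every line $L$ has an equation $tX-uY+v=0$ normalized so that $t=1$ if $u=0$ and $u=1$ if $u\neq 0$; these coefficients are denoted $t_L,u_L,v_L$. A quadrilateral $Q=ABA'B'$ consists of four distinct lines $A,B,A',B'$ (the sides), not all through one point, such that adjacent sides ($A,B$; $B,A'$; $A',B'$; $B',A$) are not parallel; opposite sides ($A,A'$ and $B,B'$) may be parallel. The vertices are $A\cap B$, $B\cap A'$, $A'\cap B'$, $B'\cap A$; three sides may pass through a common point (then two vertices coincide and $Q$ is called improper; otherwise proper). The diagonals are the lines through nonadjacent vertices ($A\cap B$ and $A'\cap B'$; $B\cap A'$ and $B'\cap A$). The centroid is the midpoint of the midpoints of the diagonals (equivalently, the average of the four vertices). A diagonal point of $Q$ is the intersection point (possibly at infinity) of a pair of opposite sides or of the two diagonals. Define $\alpha=t_Au_Bu_{A'}u_{B'}-u_At_Bu_{A'}u_{B'}+u_Au_Bt_{A'}u_{B'}-u_Au_Bu_{A'}t_{B'}$,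 $\beta=t_Au_Bt_{A'}u_{B'}-u_At_Bu_{A'}t_{B'}$, $\gamma=t_At_Bt_{A'}u_{B'}-t_At_Bu_{A'}t_{B'}+t_Au_Bt_{A'}t_{B'}-u_At_Bt_{A'}t_{B'}$, and the quadratic form $\Phi_Q(X,Y)=\gamma X^2-2\beta XY+\alpha Y^2$. A line $\ell$ crosses a pair of lines $\{\ell_1,\ell_2\}$ if $\ell$ is distinct from both and not parallel to both; then $\mathrm{mid}_{\{\ell_1,\ell_2\}}(\ell)$ is the midpoint of the two points where $\ell$ meets $\ell_1$ and $\ell_2$, except that if one of these points is at infinity it is defined to be the point at infinity of $\ell$. A line $\ell$ bisects $Q$ if $\mathrm{mid}_{\mathsf P}(\ell)=\mathrm{mid}_{\mathsf P'}(\ell)$ for all pairs $\mathsf P,\mathsf P'$ among the two pairs of opposite sides $\{A,A'\},\{B,B'\}$ that $\ell$ crosses; this common point is the midpoint $\mathrm{mid}_Q(\ell)$ of the bisector $\ell$. The bisector locus of $Q$ is the set of midpoints of the bisectors of $Q$. *)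

(* Defs.v *)
From HB Require Import structures.
From mathcomp Require Import all_boot all_order all_algebra.
Set Implicit Arguments. Unset Strict Implicit. Unset Printing Implicit Defensive.
Import Order.TTheory GRing.Theory Num.Theory.
Local Open Scope ring_scope.

Section Geometry.
Variable K : fieldType.

(* A line  t X - u Y + v = 0  with the normalization of the paper:
   t = 1 if u = 0, and u = 1 if u <> 0. Normalized coefficients are unique,
   so equality of lines is equality of records. *)
Record line := Line {
  lt : K; lu : K; lv : K;
  line_norm : ((lu == 0) && (lt == 1)) || (lu == 1) }.

Definition point := (K * K)%type.

Definition on_line (p : point) (L : line) : Prop :=
  lt L * p.1 - lu L * p.2 + lv L = 0.

(* parallel (in the weak sense: identical lines are parallel) *)
Definition parallel (L1 L2 : line) : Prop := lt L1 * lu L2 = lt L2 * lu L1.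

(* intersection point of two non-parallel lines (Cramer's rule) *)
Definition meet (L1 L2 : line) : point :=
  let D := lu L1 * lt L2 - lt L1 * lu L2 in
  ((lv L1 * lu L2 - lu L1 * lv L2) / D, (lt L2 * lv L1 - lt L1 * lv L2) / D).

(* intersection in the projective plane: [None] = a point at infinity *)
Definition meetP (L1 L2 : line) : option point :=
  if lt L1 * lu L2 == lt L2 * lu L1 then None else Some (meet L1 L2).

Definition midpoint (p q : point) : point :=
  ((p.1 + q.1) / 2%:R, (p.2 + q.2) / 2%:R).

Definition crosses (l : line) (P : line * line) : Prop :=
  l <> P.1 /\ l <> P.2 /\ ~ (parallel l P.1 /\ parallel l P.2).

(* mid_{P}(l): [Some m] for a finite midpoint, [None] for the point at
   infinity of l (used when one of the intersection points is at infinity). *)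
Definition mid (P : line * line) (l : line) : option point :=
  match meetP l P.1, meetP l P.2 with
  | Some p, Some q => Some (midpoint p q)
  | _, _ => None
  end.

Definition quadrilateral (A B A' B' : line) : Prop :=
  [/\ A <> B, A <> A', A <> B' & B <> A'] /\ B <> B' /\ A' <> B' /\
  ~ (exists p, [/\ on_line p A, on_line p B, on_line p A' & on_line p B']) /\
  [/\ ~ parallel A B, ~ parallel B A', ~ parallel A' B' & ~ parallel B' A].

Definition opp_pair (A B A' B' : line) (b : bool) : line * line :=
  if b then (A, A') else (B, B').

Definition bisects (A B A' B' : line) (l : line) : Prop :=
  forall P P' : bool,
    crosses l (opp_pair A B A' B' P) -> crosses l (opp_pair A B A' B' P') ->
    mid (opp_pair A B A' B' P) l = mid (opp_pair A B A' B' P') l.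

Definition bisector_locus (A B A' B' : line) : point -> Prop :=
  fun m => exists l : line, bisects A B A' B' l /\
    exists P : bool, crosses l (opp_pair A B A' B' P) /\
                     mid (opp_pair A B A' B' P) l = Some m.

Definition centroid (A B A' B' : line) : point :=
  let V := [:: meet A B; meet B A'; meet A' B'; meet B' A] in
  ((\sum_(p <- V) p.1) / 4%:R, (\sum_(p <- V) p.2) / 4%:R).

Definition on_line_through (p q r : point) : Prop :=
  (r.1 - q.1) * (p.2 - q.2) = (r.2 - q.2) * (p.1 - q.1).

Definition diagonal_point (A B A' B' : line) (p : point) : Prop :=
  (on_line p A /\ on_line p A') \/ (on_line p B /\ on_line p B') \/
  (on_line_through p (meet A B) (meet A' B') /\
   on_line_through p (meet B A') (meet B' A)).

Definition alphaQ (A B A' B' : line) : K :=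
  lt A * lu B * lu A' * lu B' - lu A * lt B * lu A' * lu B'
  + lu A * lu B * lt A' * lu B' - lu A * lu B * lu A' * lt B'.
Definition betaQ (A B A' B' : line) : K :=
  lt A * lu B * lt A' * lu B' - lu A * lt B * lu A' * lt B'.
Definition gammaQ (A B A' B' : line) : K :=
  lt A * lt B * lt A' * lu B' - lt A * lt B * lu A' * lt B'
  + lt A * lu B * lt A' * lt B' - lu A * lt B * lt A' * lt B'.

Definition PhiQ (A B A' B' : line) (X Y : K) : K :=
  gammaQ A B A' B' * X ^+ 2 - 2%:R * betaQ A B A' B' * X * Y
  + alphaQ A B A' B' * Y ^+ 2.

End Geometry.

(* Main.v *)
Require Import Defs.
From mathcomp Require Import all_boot all_order all_algebra.
From mathcomp Require Import ring.
From Stdlib Require Import Classical.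
Import GRing.Theory.
Local Open Scope ring_scope.
Set Implicit Arguments. Unset Strict Implicit.

Section S.
Variable K : fieldType.
Implicit Types L A B l : line K.

Definition ev L (m : point K) := lt L * m.1 - lu L * m.2 + lv L.
Definition gx L1 L2 (m : point K) := ev L1 m * lt L2 + ev L2 m * lt L1.
Definition gy L1 L2 (m : point K) := ev L1 m * lu L2 + ev L2 m * lu L1.
Definition Dm A B (A' B' : line K) m := gx B B' m * gy A A' m - gx A A' m * gy B B' m.
Definition Dd L1 L2 := lu L1 * lt L2 - lt L1 * lu L2.
Definition fc L1 L2 l m := gx L1 L2 m * lu l - gy L1 L2 m * lt l.
Definition T L1 L2 L3 :=
  lt L1 * (lu L3 * lv L2 - lu L2 * lv L3) + lu L1 * (lt L2 * lv L3 - lt L3 * lv L2)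
  + lv L1 * (lt L3 * lu L2 - lt L2 * lu L3).

Lemma Dd_neq0 L1 L2 : ~ parallel L1 L2 -> Dd L1 L2 != 0.
Proof.
move=> H; apply/eqP => E; apply: H; rewrite /parallel; apply/eqP; rewrite -subr_eq0.
have -> : lt L1 * lu L2 - lt L2 * lu L1 = - Dd L1 L2 by rewrite /Dd; ring.
by rewrite E oppr0.
Qed.

Lemma line_ext l1 l2 : lt l1 = lt l2 -> lu l1 = lu l2 -> lv l1 = lv l2 -> l1 = l2.
Proof.
case: l1 => t u v n; case: l2 => t' u' v' n' /= e1 e2 e3; subst.
by rewrite (bool_irrelevance n n').
Qed.

Lemma norm_nz l : (lu l != 0) || (lt l != 0).
Proof.
case: l => t u v /= /orP [/andP [_ /eqP ->] | /eqP ->]; by rewrite oner_eq0 ?orbT.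
Qed.

Lemma eq_from {x y e1v e2v : K} : e1v = 0 -> e2v = 0 -> x - y = e1v - e2v -> x = y.
Proof. by move=> h1 h2 h; apply/eqP; rewrite -subr_eq0 h h1 h2 subrr. Qed.

Lemma par_eq l Q m : parallel l Q -> ev l m = 0 -> ev Q m = 0 -> l = Q.
Proof.
rewrite /parallel /ev => hp e1 e2.
have n := line_norm l; have n' := line_norm Q.
case/orP: n => [/andP [/eqP hu /eqP ht] | /eqP hu];
case/orP: n' => [/andP [/eqP hu' /eqP ht'] | /eqP hu'];
  rewrite ?hu ?ht ?hu' ?ht' in hp e1 e2.
- apply: line_ext; rewrite ?hu ?ht ?hu' ?ht' //.
  by apply: (eq_from e1 e2); ring.
- by move: hp; rewrite !mulr0 !mul1r => /eqP; rewrite oner_eq0.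
- by move: hp; rewrite !mulr0 !mul1r => /eqP; rewrite eq_sym oner_eq0.
- move: hp; rewrite !mulr1 => hp; rewrite hp in e1.
  apply: line_ext; rewrite ?hu ?hu' //.
  by apply: (eq_from e1 e2); ring.
Qed.

Lemma par_trans l (X Y : line K) : parallel l X -> parallel l Y -> parallel X Y.
Proof.
case: l => t u v n; rewrite /parallel /=.
case/orP: n => [/andP [/eqP hu /eqP ht] | /eqP hu]; subst.
- rewrite !mul1r !mulr0 => -> ->; by rewrite !mulr0.
- rewrite !mulr1 => <- <-; ring.
Qed.

Lemma par_sym (X Y : line K) : parallel X Y -> parallel Y X.
Proof. by rewrite /parallel => ->. Qed.

Lemma ev_meet1 L1 L2 : Dd L1 L2 != 0 -> ev L1 (meet L1 L2) = 0.
Proof. by move=> h; rewrite /ev /meet /=; move: h; rewrite /Dd => h; field. Qed.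
Lemma ev_meet2 L1 L2 : Dd L1 L2 != 0 -> ev L2 (meet L1 L2) = 0.
Proof. by move=> h; rewrite /ev /meet /=; move: h; rewrite /Dd => h; field. Qed.
Lemma ev_meet3 L1 L2 L3 : Dd L1 L2 != 0 -> T L1 L2 L3 = 0 -> ev L3 (meet L1 L2) = 0.
Proof.
move=> h hT.
have -> : ev L3 (meet L1 L2) = T L1 L2 L3 / Dd L1 L2.
  by rewrite /ev /meet /T /=; move: h; rewrite /Dd => h; field.
by rewrite hT mul0r.
Qed.
Lemma T_cyc L1 L2 L3 : T L1 L2 L3 = T L2 L3 L1.
Proof. rewrite /T; ring. Qed.

Lemma fc_expand L1 L2 l m :
  fc L1 L2 l m = ev L1 m * (lt L2 * lu l - lu L2 * lt l) + ev L2 m * (lt L1 * lu l - lu L1 * lt l).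
Proof. rewrite /fc /gx /gy; ring. Qed.

Lemma mid_on l L1 L2 : Dd l L1 != 0 -> Dd l L2 != 0 -> (2%:R : K) != 0 ->
  ev l (midpoint (meet l L1) (meet l L2)) = 0.
Proof.
move=> h1 h2 h3; rewrite /ev /midpoint /meet /=; move: h1 h2; rewrite /Dd => h1 h2; field.
by rewrite h1 h2 h3.
Qed.

Lemma mid_fc l L1 L2 : Dd l L1 != 0 -> Dd l L2 != 0 -> (2%:R : K) != 0 ->
  fc L1 L2 l (midpoint (meet l L1) (meet l L2)) = 0.
Proof.
move=> h1 h2 h3; rewrite /fc /gx /gy /ev /midpoint /meet /=; move: h1 h2; rewrite /Dd => h1 h2; field.
by rewrite h1 h2 h3.
Qed.

Lemma mid_unique l L1 L2 m : Dd l L1 != 0 -> Dd l L2 != 0 -> (2%:R : K) != 0 -> ev l m = 0 ->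
  (midpoint (meet l L1) (meet l L2) = m <-> fc L1 L2 l m = 0).
Proof.
move=> h1 h2 h3 em.
set M := midpoint _ _.
have eM := mid_on h1 h2 h3; have fM := mid_fc h1 h2 h3.
rewrite -/M in eM fM.
split; first by move=> <-.
move=> fm; suff : M = m by [].
have k1 : lu l * (fc L1 L2 l m - fc L1 L2 l M) =
   2%:R * Dd l L1 * Dd l L2 * (m.1 - M.1)
   - (2%:R * lu L1 * lu L2 * lt l - (lu L1 * lt L2 + lu L2 * lt L1) * lu l) * (ev l m - ev l M).
  by rewrite /fc /gx /gy /ev /Dd; ring.
have k2 : lt l * (fc L1 L2 l m - fc L1 L2 l M) =
   2%:R * Dd l L1 * Dd l L2 * (m.2 - M.2)
   + (2%:R * lt L1 * lt L2 * lu l - (lt L1 * lu L2 + lt L2 * lu L1) * lt l) * (ev l m - ev l M).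
  by rewrite /fc /gx /gy /ev /Dd; ring.
rewrite fm fM em eM !subrr !mulr0 subr0 addr0 in k1 k2.
have nz : 2%:R * Dd l L1 * Dd l L2 != 0 by rewrite !mulf_neq0.
move/esym/eqP: k1; rewrite mulf_eq0 (negbTE nz) /= subr_eq0 => /eqP e1.
move/esym/eqP: k2; rewrite mulf_eq0 (negbTE nz) /= subr_eq0 => /eqP e2.
case: m e1 e2 {em fm} => x y /= -> ->. by rewrite /M.
Qed.

Lemma cross_mid_cond l Q1 Q2 m : (2%:R : K) != 0 -> mid (Q1, Q2) l = Some m ->
  ev l m = 0 /\ fc Q1 Q2 l m = 0.
Proof.
move=> h2; rewrite /mid /meetP /=.
case: eqP => // np1; case: eqP => // np2 [<-].
have d1 := Dd_neq0 np1; have d2 := Dd_neq0 np2.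
by split; [apply: mid_on | apply: mid_fc].
Qed.

Lemma npar_nz (l Q : line K) : ~ (lt l * lu Q = lt Q * lu l) -> lt Q * lu l - lu Q * lt l != 0.
Proof.
move=> np; apply/eqP => z; apply: np.
by apply: (eq_from (erefl (0:K)) z); ring.
Qed.

Lemma par_z (l Q : line K) : lt l * lu Q = lt Q * lu l -> lt Q * lu l - lu Q * lt l = 0.
Proof. by move=> p; rewrite -p; ring. Qed.

Lemma cross_gives_mid l Q1 Q2 m : (2%:R : K) != 0 -> ev l m = 0 -> fc Q1 Q2 l m = 0 ->
  crosses l (Q1, Q2) -> mid (Q1, Q2) l = Some m.
Proof.
move=> h2 em fm [/= n1 [/= n2 np]].
have E := fc_expand Q1 Q2 l m.
rewrite /mid /meetP /=.
case: (lt l * lu Q1 =P lt Q1 * lu l) => p1; case: (lt l * lu Q2 =P lt Q2 * lu l) => p2.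
- by exfalso; apply: np.
- exfalso; rewrite fm (par_z p1) mulr0 addr0 in E.
  move/esym/eqP: E; rewrite mulf_eq0 (negbTE (npar_nz p2)) orbF => /eqP e.
  by apply: n1; apply: (par_eq p1 em e).
- exfalso; rewrite fm (par_z p2) mulr0 add0r in E.
  move/esym/eqP: E; rewrite mulf_eq0 (negbTE (npar_nz p1)) orbF => /eqP e.
  by apply: n2; apply: (par_eq p2 em e).
- congr Some; apply/mid_unique => //; exact: Dd_neq0.
Qed.

Lemma crosses_decomp l Q1 Q2 : ~ crosses l (Q1, Q2) ->
  l = Q1 \/ l = Q2 \/ (parallel l Q1 /\ parallel l Q2).
Proof.
rewrite /crosses /= => H.
destruct (classic (l = Q1)) as [e|e]; [by left|].
destruct (classic (l = Q2)) as [e'|e']; [by right; left|].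
right; right; apply: NNPP => hn; apply: H; tauto.
Qed.

Lemma pair_cond_other l Q1 Q2 m : (2%:R : K) != 0 -> ev l m = 0 ->
  (crosses l (Q1, Q2) -> mid (Q1, Q2) l = Some m) -> fc Q1 Q2 l m = 0.
Proof.
move=> h2 em H.
destruct (classic (crosses l (Q1, Q2))) as [c|c].
  by have [] := cross_mid_cond h2 (H c).
rewrite fc_expand.
case: (crosses_decomp c) => [e|[e|[pa pb]]].
- by subst; rewrite em; ring.
- by subst; rewrite em; ring.
- by rewrite (par_z pa) (par_z pb) !mulr0 addr0.
Qed.

Lemma det0 A B (A' B' : line K) l m : fc A A' l m = 0 -> fc B B' l m = 0 -> Dm A B A' B' m = 0.
Proof.
move=> fA fB; have := norm_nz l; case/orP => nz.
- have : lu l * Dm A B A' B' m = gy A A' m * fc B B' l m - gy B B' m * fc A A' l m.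
    by rewrite /Dm /fc; ring.
  rewrite fA fB !mulr0 subrr => /eqP; rewrite mulf_eq0 (negbTE nz) => /eqP //.
- have : lt l * Dm A B A' B' m = gx A A' m * fc B B' l m - gx B B' m * fc A A' l m.
    by rewrite /Dm /fc; ring.
  rewrite fA fB !mulr0 subrr => /eqP; rewrite mulf_eq0 (negbTE nz) => /eqP //.
Qed.

Lemma some_cross A B (A' B' : line K) l : quadrilateral A B A' B' ->
  crosses l (A, A') \/ crosses l (B, B').
Proof.
move=> [[nAB nAA' nAB' nBA'] [nBB' [nA'B' [_ [pAB pBA' pA'B' pB'A]]]]].
destruct (classic (crosses l (A, A'))) as [c|c]; [by left|].
destruct (classic (crosses l (B, B'))) as [d|d]; [by right|].
exfalso.
case: (crosses_decomp c) => [e1|[e1|[p1 p2]]]; case: (crosses_decomp d) => [e2|[e2|[p3 p4]]].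
- by apply: nAB; rewrite -e1 -e2.
- by apply: nAB'; rewrite -e1 -e2.
- by apply: pAB; rewrite -e1.
- by apply: nBA'; rewrite -e1 -e2.
- by apply: nA'B'; rewrite -e1 -e2.
- by apply: pA'B'; rewrite -e1.
- by apply: pAB; apply: par_sym; rewrite -e2.
- by apply: pB'A; rewrite -e2.
- by apply: pAB; apply: (par_trans p1 p3).
Qed.

Lemma mkline (p q : K) (m : point K) : (p != 0) || (q != 0) ->
  exists l : line K, ev l m = 0 /\ (forall g h : K, g * p = h * q -> g * lu l = h * lt l).
Proof.
case: (eqVneq p 0) => [hp|hp] /= hq.
- have n : ((0 : K) == 0) && ((1 : K) == 1) || ((0 : K) == 1) by rewrite !eqxx.
  exists (@Line K 1 0 (- m.1) n); split; first by rewrite /ev /=; ring.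
  move=> g h; rewrite hp /= mulr0 mulr1 => /esym/eqP; rewrite mulf_eq0 (negbTE hq) orbF => /eqP -> //.
- have n : ((1 : K) == 0) && ((q / p) == 1) || ((1 : K) == 1) by rewrite !eqxx orbT.
  exists (@Line K (q / p) 1 (m.2 - q / p * m.1) n); split; first by rewrite /ev /=; ring.
  by move=> g h /= E; rewrite mulr1 mulrA -E mulfK.
Qed.

Lemma dir_exists A B (A' B' : line K) m : Dm A B A' B' m = 0 ->
  exists p q : K, ((p != 0) || (q != 0)) /\ gx A A' m * p = gy A A' m * q /\
                  gx B B' m * p = gy B B' m * q.
Proof.
rewrite /Dm => D0.
have D1 : gx B B' m * gy A A' m = gx A A' m * gy B B' m by apply/eqP; rewrite -subr_eq0 D0.
case: (boolP ((gy A A' m != 0) || (gx A A' m != 0))) => hA.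
  exists (gy A A' m), (gx A A' m); split => //; split; first by rewrite mulrC.
  by rewrite D1 mulrC.
case: (boolP ((gy B B' m != 0) || (gx B B' m != 0))) => hB.
  exists (gy B B' m), (gx B B' m); split => //; split; last by rewrite mulrC.
  move: hA; rewrite negb_or !negbK => /andP [/eqP -> /eqP ->]; by rewrite !mul0r.
exists 1, 0; split; first by rewrite oner_eq0.
move: hA hB; rewrite !negb_or !negbK => /andP [/eqP -> /eqP ->] /andP [/eqP -> /eqP ->].
by rewrite !mul0r.
Qed.

Lemma locus_iff A B (A' B' : line K) m : (2%:R : K) != 0 -> quadrilateral A B A' B' ->
  (bisector_locus A B A' B' m <-> Dm A B A' B' m = 0).
Proof.
move=> h2 hQ; split.
- case=> l [Hbis [P [Hc Hm]]].
  have [em fP] := cross_mid_cond h2 Hm.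
  case: P Hc Hm fP => /= Hc Hm fP.
  + have fB : fc B B' l m = 0.
      apply: (pair_cond_other h2 em) => Hc'.
      rewrite -Hm; exact: (Hbis false true Hc' Hc).
    exact: det0 fP fB.
  + have fA : fc A A' l m = 0.
      apply: (pair_cond_other h2 em) => Hc'.
      rewrite -Hm; exact: (Hbis true false Hc' Hc).
    exact: det0 fA fP.
- move=> D0.
  have [p [q [npq [eA eB]]]] := dir_exists D0.
  have [l [em hl]] := mkline m npq.
  have fA : fc A A' l m = 0 by rewrite /fc (hl _ _ eA) subrr.
  have fB : fc B B' l m = 0 by rewrite /fc (hl _ _ eB) subrr.
  have midP : forall P, crosses l (opp_pair A B A' B' P) -> mid (opp_pair A B A' B' P) l = Some m.
    by case => /= hc; apply: cross_gives_mid.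
  exists l; split.
    by move=> P P' hP hP'; rewrite !midP.
  case: (some_cross l hQ) => hc; [exists true | exists false]; split => //; exact: midP.
Qed.
Lemma G1_eq A B (A' B' : line K) : Dd A B != 0 -> Dd B A' != 0 -> Dd A' B' != 0 -> Dd B' A != 0 ->
  (4%:R : K) != 0 ->
  let c := centroid A B A' B' in
  Dm A B A' B' (1,0) - Dm A B A' B' (-1,0) - 8%:R * (gammaQ A B A' B' * c.1 - betaQ A B A' B' * c.2) = 0.
Proof.
move=> h1 h2 h3 h4 h5 /=.
rewrite /centroid /= !big_cons !big_nil /=.
rewrite /Dm /gx /gy /ev /gammaQ /betaQ /meet /=.
move: h1 h2 h3 h4; rewrite /Dd => h1 h2 h3 h4.
field.
by rewrite h5 h1 h2 h3 h4.
Qed.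

Lemma G2_eq A B (A' B' : line K) : Dd A B != 0 -> Dd B A' != 0 -> Dd A' B' != 0 -> Dd B' A != 0 ->
  (4%:R : K) != 0 ->
  let c := centroid A B A' B' in
  Dm A B A' B' (0,1) - Dm A B A' B' (0,-1) - 8%:R * (alphaQ A B A' B' * c.2 - betaQ A B A' B' * c.1) = 0.
Proof.
move=> h1 h2 h3 h4 h5 /=.
rewrite /centroid /= !big_cons !big_nil /=.
rewrite /Dm /gx /gy /ev /alphaQ /betaQ /meet /=.
move: h1 h2 h3 h4; rewrite /Dd => h1 h2 h3 h4.
field.
by rewrite h5 h1 h2 h3 h4.
Qed.

Lemma conic_ring A B (A' B' : line K) (m : point K) (h k : K) :
  2%:R * (Dm A B A' B' m - Dm A B A' B' (h, k) + 2%:R * PhiQ A B A' B' (m.1 - h) (m.2 - k)) =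
  (m.1 - h) * (Dm A B A' B' (1,0) - Dm A B A' B' (-1,0) - 8%:R * (gammaQ A B A' B' * h - betaQ A B A' B' * k))
  + (m.2 - k) * (Dm A B A' B' (0,1) - Dm A B A' B' (0,-1) - 8%:R * (alphaQ A B A' B' * k - betaQ A B A' B' * h)).
Proof. rewrite /Dm /gx /gy /ev /PhiQ /alphaQ /betaQ /gammaQ /=; ring. Qed.

Lemma conic_iff A B (A' B' : line K) (m d : point K) : (2%:R : K) != 0 -> quadrilateral A B A' B' ->
  let c := centroid A B A' B' in
  (PhiQ A B A' B' (m.1 - c.1) (m.2 - c.2) = PhiQ A B A' B' (d.1 - c.1) (d.2 - c.2) <->
   Dm A B A' B' m = Dm A B A' B' d).
Proof.
move=> h2 [_ [_ [_ [_ [pAB pBA' pA'B' pB'A]]]]] c.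
have h4 : (4%:R : K) != 0.
  by rewrite (_ : 4%:R = 2%:R * 2%:R) ?mulf_neq0 // -natrM.
have g1 := G1_eq (Dd_neq0 pAB) (Dd_neq0 pBA') (Dd_neq0 pA'B') (Dd_neq0 pB'A) h4.
have g2 := G2_eq (Dd_neq0 pAB) (Dd_neq0 pBA') (Dd_neq0 pA'B') (Dd_neq0 pB'A) h4.
rewrite -/c in g1 g2.
have key : forall p : point K, Dm A B A' B' p = Dm A B A' B' (c.1, c.2) - 2%:R * PhiQ A B A' B' (p.1 - c.1) (p.2 - c.2).
  move=> p; have := conic_ring A B A' B' p c.1 c.2.
  rewrite g1 g2 !mulr0 addr0 => /eqP; rewrite mulf_eq0 (negbTE h2) /= => /eqP E.
  by apply: (eq_from E (erefl (0:K))); ring.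
rewrite (key m) (key d); split => [-> //|E].
have : 2%:R * (PhiQ A B A' B' (m.1 - c.1) (m.2 - c.2) - PhiQ A B A' B' (d.1 - c.1) (d.2 - c.2)) = 0.
  by move/eqP: E; rewrite -subr_eq0 => /eqP E; apply: (eq_from (erefl (0:K)) E); ring.
move/eqP; rewrite mulf_eq0 (negbTE h2) /= subr_eq0 => /eqP //.
Qed.

Lemma alg_diag (tA uA tB uB tA' uA' tB' uB' eA eB eA' eB' TA TB TA' TB' : K) :
  TA*tA - TB*tB + TA'*tA' - TB'*tB' = 0 ->
  TA*uA - TB*uB + TA'*uA' - TB'*uB' = 0 ->
  TA*eA - TB*eB + TA'*eA' - TB'*eB' = 0 ->
  TA'*eA' - TB'*eB' = 0 -> TB'*eB' - TA*eA = 0 ->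
  (TA*TA' != 0) || (TB*TB' != 0) ->
  (eB*tB' + eB'*tB) * (eA*uA' + eA'*uA) - (eA*tA' + eA'*tA) * (eB*uB' + eB'*uB) = 0.
Proof.
move=> Rt Ru Re Z1 Z2 nz.
have Wt : TA*TA' * (eA*tA' + eA'*tA) - TB*TB' * (eB*tB' + eB'*tB) = 0.
  have -> : TA*TA' * (eA*tA' + eA'*tA) - TB*TB' * (eB*tB' + eB'*tB) =
     TA*eA*(TA*tA - TB*tB + TA'*tA' - TB'*tB') + tA*TA*((TA'*eA' - TB'*eB') + (TB'*eB' - TA*eA))
     - tB'*TB'*((TA'*eA' - TB'*eB') - (TA*eA - TB*eB + TA'*eA' - TB'*eB'))
     - tB*TB*(TB'*eB' - TA*eA) by ring.
  by rewrite Rt Z1 Z2 Re; ring.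
have Wu : TA*TA' * (eA*uA' + eA'*uA) - TB*TB' * (eB*uB' + eB'*uB) = 0.
  have -> : TA*TA' * (eA*uA' + eA'*uA) - TB*TB' * (eB*uB' + eB'*uB) =
     TA*eA*(TA*uA - TB*uB + TA'*uA' - TB'*uB') + uA*TA*((TA'*eA' - TB'*eB') + (TB'*eB' - TA*eA))
     - uB'*TB'*((TA'*eA' - TB'*eB') - (TA*eA - TB*eB + TA'*eA' - TB'*eB'))
     - uB*TB*(TB'*eB' - TA*eA) by ring.
  by rewrite Ru Z1 Z2 Re; ring.
case/orP: nz => nz.
- have : TA*TA' * ((eB*tB' + eB'*tB) * (eA*uA' + eA'*uA) - (eA*tA' + eA'*tA) * (eB*uB' + eB'*uB)) =
     (eB*tB' + eB'*tB) * (TA*TA' * (eA*uA' + eA'*uA) - TB*TB' * (eB*uB' + eB'*uB))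
     - (eB*uB' + eB'*uB) * (TA*TA' * (eA*tA' + eA'*tA) - TB*TB' * (eB*tB' + eB'*tB)) by ring.
  rewrite Wt Wu !mulr0 subrr => /eqP; rewrite mulf_eq0 (negbTE nz) => /eqP //.
- have : TB*TB' * ((eB*tB' + eB'*tB) * (eA*uA' + eA'*uA) - (eA*tA' + eA'*tA) * (eB*uB' + eB'*uB)) =
     (eA*tA' + eA'*tA) * (TA*TA' * (eA*uA' + eA'*uA) - TB*TB' * (eB*uB' + eB'*uB))
     - (eA*uA' + eA'*uA) * (TA*TA' * (eA*tA' + eA'*tA) - TB*TB' * (eB*tB' + eB'*tB)) by ring.
  rewrite Wt Wu !mulr0 subrr => /eqP; rewrite mulf_eq0 (negbTE nz) => /eqP //.
Qed.

Lemma olt_l1 A B (A' B' : line K) (d : point K) : Dd A B != 0 -> Dd A' B' != 0 ->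
  T A B B' * ev A' d - T A B A' * ev B' d = Dd A B * Dd A' B' *
   (((meet A' B').1 - (meet A B).1) * (d.2 - (meet A B).2) - ((meet A' B').2 - (meet A B).2) * (d.1 - (meet A B).1)).
Proof. rewrite /T /ev /meet /Dd /= => h1 h2; field; by rewrite h1 h2. Qed.

Lemma olt_l2 A B (A' B' : line K) (d : point K) : Dd B A' != 0 -> Dd B' A != 0 ->
  T A B A' * ev B' d - T B A' B' * ev A d = Dd B A' * Dd B' A *
   (((meet B' A).1 - (meet B A').1) * (d.2 - (meet B A').2) - ((meet B' A).2 - (meet B A').2) * (d.1 - (meet B A').1)).
Proof. rewrite /T /ev /meet /Dd /= => h1 h2; field; by rewrite h1 h2. Qed.

Lemma k_nz A B (A' B' : line K) : quadrilateral A B A' B' ->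
  (T B A' B' * T A B B' != 0) || (T A A' B' * T A B A' != 0).
Proof.
move=> [_ [_ [_ [nocommon [pAB pBA' pA'B' pB'A]]]]].
have dAB := Dd_neq0 pAB; have dBA' := Dd_neq0 pBA'.
have dA'B' := Dd_neq0 pA'B'; have dB'A := Dd_neq0 pB'A.
rewrite -negb_and; apply/negP => /andP [k1 k2]; rewrite mulf_eq0 in k1; rewrite mulf_eq0 in k2.
case/orP: k1 => /eqP t1; case/orP: k2 => /eqP t2; apply: nocommon.
- exists (meet A' B'); rewrite T_cyc in t1; rewrite T_cyc in t2.
  by split; [exact: (ev_meet3 dA'B' t2) | exact: (ev_meet3 dA'B' t1) | exact: ev_meet1 | exact: ev_meet2].
- exists (meet B A'); rewrite T_cyc in t2.
  by split; [exact: (ev_meet3 dBA' t2) | exact: ev_meet1 | exact: ev_meet2 | exact: (ev_meet3 dBA' t1)].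
- exists (meet B' A); rewrite T_cyc T_cyc in t1; rewrite T_cyc T_cyc in t2.
  by split; [exact: ev_meet2 | exact: (ev_meet3 dB'A t1) | exact: (ev_meet3 dB'A t2) | exact: ev_meet1].
- exists (meet A B).
  by split; [exact: ev_meet1 | exact: ev_meet2 | exact: (ev_meet3 dAB t2) | exact: (ev_meet3 dAB t1)].
Qed.

Lemma diag_D0 A B (A' B' : line K) d : quadrilateral A B A' B' ->
  diagonal_point A B A' B' d -> Dm A B A' B' d = 0.
Proof.
move=> hQ; have hQ' := hQ; case: hQ' => [_ [_ [_ [_ [pAB pBA' pA'B' pB'A]]]]].
case=> [[hA hA'] | [[hB hB'] | [h1 h2]]].
- have eA : ev A d = 0 := hA; have eA' : ev A' d = 0 := hA'.
  by rewrite /Dm /gx /gy eA eA'; ring.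
- have eB : ev B d = 0 := hB; have eB' : ev B' d = 0 := hB'.
  by rewrite /Dm /gx /gy eB eB'; ring.
- move/eqP: h1; rewrite -subr_eq0 => /eqP h1.
  move/eqP: h2; rewrite -subr_eq0 => /eqP h2.
  rewrite /Dm /gx /gy.
  apply: (@alg_diag (lt A) (lu A) (lt B) (lu B) (lt A') (lu A') (lt B') (lu B')
            (ev A d) (ev B d) (ev A' d) (ev B' d) (T B A' B') (T A A' B') (T A B B') (T A B A')).
  + by rewrite /T; ring.
  + by rewrite /T; ring.
  + by rewrite /T /ev; ring.
  + by rewrite (olt_l1 _ (Dd_neq0 pAB) (Dd_neq0 pA'B')) h1 mulr0.
  + by rewrite (olt_l2 _ (Dd_neq0 pBA') (Dd_neq0 pB'A)) h2 mulr0.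
  + exact: k_nz.
Qed.

End S.

Theorem theorem5p1 (K : fieldType) (char2 : (2%:R : K) != 0)
  (A B A' B' : line K) (a b : K) :
  quadrilateral A B A' B' ->
  diagonal_point A B A' B' (a, b) ->
  let c := centroid A B A' B' in
  forall x y : K,
    bisector_locus A B A' B' (x, y) <->
    PhiQ A B A' B' (x - c.1) (y - c.2) = PhiQ A B A' B' (a - c.1) (b - c.2).
Proof.
move=> hQ hd c x y.
have H : PhiQ A B A' B' (x - c.1) (y - c.2) = PhiQ A B A' B' (a - c.1) (b - c.2) <->
         Dm A B A' B' (x, y) = Dm A B A' B' (a, b) := conic_iff (x, y) (a, b) char2 hQ.
rewrite H (diag_D0 hQ hd).
exact: locus_iff.
Qed.
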